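(* Let $G$ be a signed digraph with $n$ vertices and without negative cycles, and let $f$ be a Boolean network on $G$. The following are equivalent: (1) $f$ has a unique fixed point; (2) $f$ has a synchronizing word of length $n$; (3) $f$ is synchronizing.
   Context: A signed digraph on $V$ is $(V,E)$ with $E\subseteq V\times V\times\{-1,1\}$; cycles have no repeated vertices (a loop is a cycle) and their sign is the product of arc signs. A Boolean network (BN) is $f:\{0,1\}^V\to\{0,1\}^V$; its signed interaction digraph has a positive (negative) arc from $j$ to $i$ iff for some $x$ with $x_j=0$, $f_i(x+e_j)-f_i(x)$ is positive (negative). A BN on $G$ is one whose signed interaction digraph is $G$. $f^i(x)$ is $x$ with $x_i$ replaced by $f_i(x)$; $f^{i_1\cdots i_\ell}=f^{i_\ell}\circ\cdots\circ f^{i_1}$; $w$ is synchronizing if $f^w$ is constant; $f$ is synchronizing if it has a synchronizing word. *)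

(* Defs.v *)
From mathcomp Require Import all_boot.
Set Implicit Arguments. Unset Strict Implicit. Unset Printing Implicit Defensive.

Section BN.
Variable V : finType.

(* configurations x in {0,1}^V; true = 1 *)
Definition config := {ffun V -> bool}.

(* signed arcs (j, i, s) : arc from j to i with sign s (true = +1, false = -1) *)
Definition arc := (V * V * bool)%type.
Definition signed_digraph := {set arc}.

(* x + e_j, used when x_j = 0 *)
Definition set_one (x : config) (j : V) : config :=
  [ffun k => if k == j then true else x k].

(* positive arc j -> i : f_i(x + e_j) - f_i(x) > 0 for some x with x_j = 0 *)
Definition pos_arc (f : config -> config) (j i : V) : bool :=
  [exists x : config, [&& ~~ x j, ~~ f x i & f (set_one x j) i]].
(* negative arc j -> i : f_i(x + e_j) - f_i(x) < 0 for some x with x_j = 0 *)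
Definition neg_arc (f : config -> config) (j i : V) : bool :=
  [exists x : config, [&& ~~ x j, f x i & ~~ f (set_one x j) i]].

Definition interaction_digraph (f : config -> config) : signed_digraph :=
  [set e : arc | if e.2 then pos_arc f e.1.1 e.1.2 else neg_arc f e.1.1 e.1.2].

Definition BN_on (G : signed_digraph) (f : config -> config) : Prop :=
  interaction_digraph f = G.

(* G has a negative cycle: distinct vertices c = v_0 ... v_{k-1} (k >= 1,
   a loop being the case k = 1) and signs s_0 ... s_{k-1} with
   (v_t, v_{t+1 mod k}, s_t) in G and product of signs = -1 *)
Definition has_negative_cycle (G : signed_digraph) : Prop :=
  exists (v : V) (p : seq V) (s : seq bool),
    let c := v :: p in
    [/\ uniq c, size s = size c,
        (forall t, t < size c ->
           ((nth v c t, nth v c (t.+1 %% size c)), nth true s t) \in G)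
      & odd (count negb s)].

Definition update (f : config -> config) (i : V) (x : config) : config :=
  [ffun k => if k == i then f x i else x k].

Definition apply_word (f : config -> config) (w : seq V) (x : config) : config :=
  foldl (fun y i => update f i y) x w.

Definition synchronizing_word (f : config -> config) (w : seq V) : Prop :=
  exists c : config, forall x : config, apply_word f w x = c.

Definition synchronizing (f : config -> config) : Prop :=
  exists w : seq V, synchronizing_word f w.

Definition unique_fixed_point (f : config -> config) : Prop :=
  exists! x : config, f x = x.

End BN.

(* Main.v *)
Require Import Defs.
From mathcomp Require Import all_boot zify.
Set Implicit Arguments. Unset Strict Implicit. Unset Printing Implicit Defensive.

Section Parity.
Variable V : finType.
Variable f : config V -> config V.
Local Notation G := (interaction_digraph f).
Hypothesis noneg : ~ has_negative_cycle G.

Definition R2 (U : {set V}) : rel (V * bool) :=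
  fun a b => [&& a.1 \in U, b.1 \in U & ((a.1, b.1), a.2 == b.2) \in G].

Definition gstep (u w : V * bool) : V * bool := (u.1, u.2 == w.2).
Definition Erel : rel (V * bool) := fun u w => ((u.1, w.1), u.2) \in G.

Lemma cyc_path U a q p h : path (R2 U) a (q::p) -> h.1 = (last q p).1 ->
  path Erel (gstep a q) (rcons (pairmap gstep q p) h).
Proof.
elim: p a q => [|q' p IH] a q /=.
  by move=> /andP[/and3P[_ _ H] _] Hh; rewrite /Erel /= Hh andbT.
move=> /andP[/and3P[_ _ H] Hp] Hh; rewrite {1}/Erel /= H /=.
exact: IH.
Qed.

Lemma odd_pairmap a p :
  odd (count negb (map snd (pairmap gstep a p))) = (a.2 != (last a p).2).
Proof.
elim: p a => [|q p IH] a /=; first by rewrite eqxx.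
rewrite oddD IH.
by case: (a.2); case: (q.2); case: ((last q p).2).
Qed.

Lemma fst_pairmap a p : map fst (pairmap gstep a p) = belast a.1 (map fst p).
Proof. by elim: p a => //= q p IH a; rewrite IH. Qed.

Lemma neg_cycle_of U a q p : path (R2 U) a (q::p) -> uniq (map fst (q::p)) ->
  (last q p).1 = a.1 -> (last q p).2 = a.2.
Proof.
move=> Hp Hu Hl; apply/eqP; apply/negPn/negP => Hne; apply: noneg.
pose cyc := pairmap gstep a (q::p).
have Hc : map fst cyc = a.1 :: map fst (pairmap gstep q p) by [].
exists a.1, (map fst (pairmap gstep q p)), (map snd cyc).
rewrite -Hc; split.
- rewrite fst_pairmap /= .
  move: Hu; rewrite map_cons lastI (last_map fst) Hl rcons_uniq.
  by [].
- by rewrite size_map; symmetry; apply: size_map.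
- move=> t; rewrite size_map => Ht.
  pose x0 := (a.1, true).
  have Hcp := cyc_path (h := gstep a q) Hp (esym Hl).
  have Hsz : size cyc = (size p).+1 by rewrite /cyc /= size_pairmap.
  have Ht' : t < size (rcons (pairmap gstep q p) (gstep a q)).
    by rewrite size_rcons size_pairmap -Hsz.
  move/(pathP x0): Hcp => /(_ t Ht').
  have -> : gstep a q :: rcons (pairmap gstep q p) (gstep a q) = rcons cyc (gstep a q) by [].
  rewrite !nth_rcons Ht.
  rewrite (nth_map x0 a.1 fst) // (nth_map x0 true snd) // (nth_map x0 a.1 fst); last first.
    by rewrite ltn_mod Hsz.
  rewrite /Erel size_pairmap.
  case: ifP => Htp.
    rewrite modn_small; last by rewrite Hsz.
    by have -> : nth x0 (pairmap gstep q p) t = nth x0 cyc t.+1 by [].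
  have Et : t = size p by move: Ht Htp; rewrite Hsz; lia.
  by rewrite Et eqxx Hsz modnn.
- rewrite odd_pairmap /= eq_sym; exact: Hne.
Qed.

Lemma dup_split (p : seq (V * bool)) : ~~ uniq (map fst p) ->
  exists p1 q1 p2 q2 p3, p = p1 ++ q1 :: p2 ++ q2 :: p3 /\ q1.1 = q2.1.
Proof.
elim: p => //= q p IH; rewrite negb_and negbK => /orP[Hin|Hu].
  case/mapP: Hin => q2 Hq2 Heq; case/splitPr: Hq2 => p2 p3.
  by exists [::], q, p2, q2, p3.
have [p1 [q1 [p2 [q2 [p3 [-> He]]]]]] := IH Hu.
by exists (q :: p1), q1, p2, q2, p3.
Qed.

Lemma parity U n : forall a p, size p < n -> path (R2 U) a p ->
  (last a p).1 = a.1 -> (last a p).2 = a.2.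
Proof.
elim: n => // n IH a p Hs Hp Hl.
case Hu: (uniq (map fst p)).
  case: p Hs Hp Hl Hu => [|q p] //= _ Hp Hl Hu.
  exact: (neg_cycle_of Hp).
have [p1 [q1 [p2 [q2 [p3 [Ep Eq]]]]]] := dup_split (negbT Hu); subst p; clear Hu.
move: Hp; rewrite cat_path /= => /andP[Hp1 /andP[Hq1]].
rewrite -cat_rcons cat_path last_rcons => /andP[Hp2 Hp3].
have E2 : q2.2 = q1.2.
  have := IH q1 (rcons p2 q2); rewrite last_rcons; apply => //.
  by move: Hs; rewrite !size_cat /= size_rcons size_cat /=; lia.
have Eq12 : q2 = q1 by move: Eq E2; case: (q1); case: (q2) => /= ? ? ? ? -> ->.
subst q2; clear Eq E2.
move: Hl; rewrite !last_cat /= last_cat /= => Hl.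
rewrite last_cat last_rcons.
have := IH a (p1 ++ q1 :: p3); rewrite last_cat /=; apply => //.
  by move: Hs; rewrite !size_cat /= size_cat /=; lia.
by rewrite cat_path /= Hp1 Hq1.
Qed.

Lemma conn_parity U x b b' : connect (R2 U) (x, b) (x, b') -> b' = b.
Proof.
case/connectP => p Hp Hl.
have := parity (ltnSn (size p)) Hp; rewrite -Hl; exact.
Qed.

Definition flp (u : V * bool) := (u.1, ~~ u.2).

Lemma conn_flip U x b y c : connect (R2 U) (x, b) (y, c) ->
  connect (R2 U) (x, ~~ b) (y, ~~ c).
Proof.
case/connectP => p Hp Hl; apply/connectP; exists (map flp p).
  rewrite (_ : (x, ~~ b) = flp (x, b)) // path_map.
  apply: sub_path Hp => [[u1 u2] [w1 w2]]; rewrite /relpre /R2 /=.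
  by case: u2; case: w2.
by rewrite (_ : (x, ~~ b) = flp (x, b)) // last_map -Hl.
Qed.

Definition ureach U x y := [exists b, connect (R2 U) (x, true) (y, b)].

Lemma ureachP U x y b : ureach U x y -> exists c, connect (R2 U) (x, b) (y, c).
Proof.
case/existsP => c H; case: b; first by exists c.
by exists (~~ c); apply: (conn_flip H).
Qed.

Lemma ureach_conn U x y b c : connect (R2 U) (x, b) (y, c) -> ureach U x y.
Proof.
case: b => H; apply/existsP; first by exists c.
by exists (~~ c); apply: (conn_flip H).
Qed.

Lemma ureach_trans U x y z : ureach U x y -> ureach U y z -> ureach U x z.
Proof.
case/existsP => b H1 /(ureachP b) [c H2].
apply/existsP; exists c; exact: connect_trans H1 H2.
Qed.

Lemma ureach_refl U x : ureach U x x.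
Proof. by apply/existsP; exists true; apply: connect0. Qed.

End Parity.


Section Dep.
Variable V : finType.
Variable f : config V -> config V.
Local Notation G := (interaction_digraph f).

Lemma dep_aux i (y : config V) n : forall x : config V, #|[set j | x j != y j]| < n ->
  (forall j, x j != y j -> ((j, i), x j) \notin G) -> f x i -> f y i.
Proof.
elim: n => // n IH x Hn Hd Hx.
case: (pickP [pred j | x j != y j]) => [j /= Hj | Hno]; last first.
  have -> : y = x by apply/ffunP => k; have := Hno k; rewrite /= => /negbFE/eqP.
  done.
pose z : config V := [ffun k => if k == j then y j else x k].
have Hz : f z i.
  have := Hd j Hj; rewrite inE /=.
  case Exj: (x j) Hj => Hj.
    have Eyj : y j = false by move: Hj; case: (y j).
    move=> /existsP Hn'; apply/negPn/negP => Hfz; apply: Hn'; exists z.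
    have -> : set_one z j = x.
      by apply/ffunP => k; rewrite !ffunE; case: eqP => [E|] //; rewrite E.
    by rewrite ffunE eqxx Eyj Hfz Hx.
  have Eyj : y j = true by move: Hj; case: (y j).
  move=> /existsP Hn'; apply/negPn/negP => Hfz; apply: Hn'; exists x.
  have -> : set_one x j = z.
    by apply/ffunP => k; rewrite !ffunE; case: eqP => [E|] //; rewrite E.
  by rewrite Exj Hx Hfz.
apply: (IH z) => //.
  apply: (@leq_trans #|[set j | x j != y j]|); last exact: Hn.
  apply: proper_card; apply/properP; split.
    by apply/subsetP => k; rewrite !inE ffunE; case: (eqVneq k j) => [->|]; rewrite ?eqxx.
  by exists j; rewrite !inE ?ffunE ?eqxx.
move=> k; rewrite ffunE; case: (eqVneq k j) => [->|_]; first by rewrite eqxx.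
exact: Hd.
Qed.

Lemma dep i (x y : config V) :
  (forall j, x j != y j -> ((j, i), x j) \notin G) -> f x i -> f y i.
Proof. exact: (dep_aux (ltnSn _)). Qed.

End Dep.


Section Words.
Variable V : finType.
Variable f : config V -> config V.

Definition agree (U : {set V}) (x y : config V) := forall k, k \notin U -> x k = y k.
Definition fixU (U : {set V}) (x : config V) := forall i, i \in U -> f x i = x i.
Definition leS (S : {set V}) (sg : V -> bool) (x y : config V) :=
  forall i, i \in S -> x i == sg i -> y i == sg i.

Lemma apply_cons (i : V) (w : seq V) (x : config V) : apply_word f (i :: w) x = apply_word f w (update f i x).
Proof. by []. Qed.

Lemma apply_cat (w1 w2 : seq V) (x : config V) :
  apply_word f (w1 ++ w2) x = apply_word f w2 (apply_word f w1 x).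
Proof. by rewrite /apply_word foldl_cat. Qed.

Lemma agree_sym (U : {set V}) (x y : config V) : agree U x y -> agree U y x.
Proof. by move=> H k kU; rewrite H. Qed.

Lemma agree_trans (U : {set V}) (x y z : config V) : agree U x y -> agree U y z -> agree U x z.
Proof. by move=> H1 H2 k kU; rewrite H1 // H2. Qed.

Lemma agree_update (U : {set V}) (x : config V) (i : V) : i \in U -> agree U (update f i x) x.
Proof.
move=> iU k kU; rewrite ffunE; case: (eqVneq k i) => [E|//].
by rewrite E iU in kU.
Qed.

Lemma apply_out (U : {set V}) (w : seq V) (x : config V) : all (mem U) w -> agree U (apply_word f w x) x.
Proof.
elim: w x => [|i w IH] x // /andP[iU Hw].
rewrite apply_cons; apply: agree_trans (IH _ Hw) _.
exact: agree_update.
Qed.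

Lemma apply_fix (U : {set V}) (w : seq V) (x : config V) : all (mem U) w -> fixU U x -> apply_word f w x = x.
Proof.
elim: w => [|i w IH] // /andP[iU Hw] Hx; rewrite apply_cons.
have -> : update f i x = x.
  by apply/ffunP => k; rewrite ffunE; case: (eqVneq k i) => [->|//]; exact: Hx.
exact: IH.
Qed.

Lemma all_sub (U U' : {set V}) (w : seq V) : U \subset U' -> all (mem U) w -> all (mem U') w.
Proof. by move=> H; apply: sub_all => i; exact: (subsetP H). Qed.

Section Mono.
Variables (U S : {set V}) (sg : V -> bool).
Hypothesis SU : S \subset U.
Hypothesis mono : forall x y, agree U x y -> leS S sg x y -> leS S sg (f x) (f y).

Lemma leS_refl (x : config V) : leS S sg x x.
Proof. by []. Qed.

Lemma leS_trans (x y z : config V) : leS S sg x y -> leS S sg y z -> leS S sg x z.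
Proof. by move=> H1 H2 i iS H; apply: H2 => //; apply: H1. Qed.

Definition post (x : config V) := leS S sg x (f x).

Lemma update_le (x : config V) (i : V) : post x -> i \in S -> leS S sg x (update f i x).
Proof.
move=> Hp iS k kS; rewrite ffunE; case: (eqVneq k i) => [->|_] //.
exact: Hp.
Qed.

Lemma post_update (x : config V) (i : V) : post x -> i \in S -> post (update f i x).
Proof.
move=> Hp iS.
have Hm := mono (agree_sym (agree_update x (subsetP SU i iS))) (update_le Hp iS).
move=> k kS; rewrite ffunE; case: (eqVneq k i) => [->|_] H.
  exact: Hm.
exact: Hm kS (Hp k kS H).
Qed.

Lemma post_word (w : seq V) (x : config V) : all (mem S) w -> post x -> post (apply_word f w x).
Proof.
elim: w x => [|i w IH] x // /andP[iS Hw] Hp; rewrite apply_cons.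
exact: IH Hw (post_update Hp iS).
Qed.

Lemma word_mono (w : seq V) (x y : config V) : all (mem S) w -> agree U x y -> leS S sg x y ->
  leS S sg (apply_word f w x) (apply_word f w y).
Proof.
elim: w x y => [|i w IH] x y // /andP[iS Hw] Ha Hl; rewrite !apply_cons.
apply: IH => //.
  move=> k kU; rewrite !ffunE; case: (eqVneq k i) => [E|_]; last exact: Ha.
  by rewrite E (subsetP SU) in kU.
move=> k kS; rewrite !ffunE; case: (eqVneq k i) => [->|_]; last exact: Hl.
exact: mono Ha Hl i iS.
Qed.

Lemma up n (x : config V) : #|[set i in S | x i != sg i]| < n -> post x ->
  exists w, [/\ all (mem S) w, fixU S (apply_word f w x),
    size w <= #|[set i in S | x i != apply_word f w x i]|
    & leS S sg x (apply_word f w x)].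
Proof.
elim: n x => // n IH x Hn Hp.
case: (boolP [exists i in S, f x i != x i]) => [/exists_inP[i iS Hi] | Hno]; last first.
  exists [::]; split => //.
  by move=> i iS; apply/eqP; apply: contraNT Hno => H; apply/exists_inP; exists i.
pose x' := update f i x.
have Hxi : x i != sg i.
  apply/negP => H; have := Hp i iS H; move: Hi H.
  by case: (f x i); case: (x i); case: (sg i).
have Hx'i : x' i = sg i.
  by rewrite /x' ffunE eqxx; move: Hi Hxi; case: (f x i); case: (x i); case: (sg i).
have Hlt : #|[set k in S | x' k != sg k]| < #|[set k in S | x k != sg k]|.
  apply: proper_card; apply/properP; split.
    apply/subsetP => k; rewrite !inE => /andP[kS Hk]; rewrite kS /=.
    by apply: contra Hk; apply: update_le.
  by exists i; rewrite !inE ?iS ?Hxi ?Hx'i ?eqxx.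
have [w [Hw Hf Hs Hl]] := IH x' (leq_trans Hlt Hn) (post_update Hp iS).
exists (i :: w); rewrite apply_cons; split => //.
- by rewrite /= iS.
- have Hy : apply_word f w x' i = sg i by apply/eqP; apply: Hl; rewrite ?Hx'i.
  have Hfxi : f x i = sg i by rewrite -Hx'i /x' ffunE eqxx.
  rewrite /= -/x'; apply: leq_ltn_trans Hs _.
  apply: proper_card; apply/properP; split.
    apply/subsetP => k; rewrite !inE => /andP[kS Hk]; rewrite kS /=.
    move: Hk; rewrite /x' ffunE; case: (eqVneq k i) => [E|//].
    by rewrite E -/x' Hy Hfxi eqxx.
  by exists i; rewrite !inE iS /= ?Hy ?Hx'i ?eqxx // eq_sym.
- exact: leS_trans (update_le Hp iS) Hl.
Qed.

End Mono.
End Words.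


Section Sync.
Variable V : finType.
Variable f : config V -> config V.

Lemma leS_neg (S : {set V}) (sg : V -> bool) (x y : config V) :
  leS S (fun i => ~~ sg i) x y <-> leS S sg y x.
Proof.
split=> H i iS; move: (H i iS); rewrite /=; case: (x i); case: (y i); case: (sg i) => //=.
all: by move=> /(_ erefl).
Qed.

Lemma card_split (S : {set V}) (P : pred V) :
  #|[set i in S | P i]| + #|[set i in S | ~~ P i]| = #|S|.
Proof.
rewrite -(cardsID [set i | P i] S); by congr (_ + _); apply: eq_card => i; rewrite !inE; case: (i \in S); case: (P i).
Qed.

Variables (U S : {set V}) (sg : V -> bool).
Hypothesis SU : S \subset U.
Hypothesis mono : forall x y, agree U x y -> leS S sg x y -> leS S sg (f x) (f y).

Lemma mono_neg : forall x y, agree U x y -> leS S (fun i => ~~ sg i) x y ->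
  leS S (fun i => ~~ sg i) (f x) (f y).
Proof.
move=> x y Ha /leS_neg Hl; apply/leS_neg; apply: mono => //; exact: agree_sym.
Qed.

Variable c : config V.

Definition botc := [ffun k => if k \in S then ~~ sg k else c k].
Definition topc := [ffun k => if k \in S then sg k else c k].

Lemma botc_agree : agree U botc c.
Proof.
move=> k kU; rewrite ffunE; case: ifP => // kS.
by rewrite (subsetP SU k kS) in kU.
Qed.

Lemma topc_agree : agree U topc c.
Proof.
move=> k kU; rewrite ffunE; case: ifP => // kS.
by rewrite (subsetP SU k kS) in kU.
Qed.

Lemma exist_C : exists y, agree U y c /\ fixU f S y.
Proof.
have Hp : post f S sg botc.
  by move=> i iS; rewrite ffunE iS; case: (sg i).
have [w [Hw Hf _ _]] := up SU mono (ltnSn _) Hp.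
exists (apply_word f w botc); split => //.
apply: agree_trans botc_agree; exact: apply_out (all_sub SU Hw).
Qed.

Hypothesis uniqC : forall y y', agree U y c -> fixU f S y -> agree U y' c -> fixU f S y' ->
  forall i, i \in S -> y i = y' i.

Lemma sync_C : exists w y1, [/\ all (mem S) w, size w <= #|S|, agree U y1 c,
  fixU f S y1 & forall x, agree U x c -> forall i, i \in S -> apply_word f w x i = y1 i].
Proof.
have Hp : post f S sg botc.
  by move=> i iS; rewrite ffunE iS; case: (sg i).
have [w1 [Hw1 Hf1 Hs1 Hl1]] := up SU mono (ltnSn _) Hp.
set y1 := apply_word f w1 botc in Hf1 Hs1 Hl1.
have Ha1 : agree U y1 c.
  apply: agree_trans botc_agree; exact: apply_out (all_sub SU Hw1).
set t := apply_word f w1 topc.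
have Hpt : post f S (fun i => ~~ sg i) t.
  apply: (post_word SU mono_neg) => //.
  by move=> i iS; rewrite ffunE iS; case: (sg i).
have [w2 [Hw2 Hf2 Hs2 Hl2]] := up SU mono_neg (ltnSn _) Hpt.
set y2 := apply_word f w2 t in Hf2 Hs2 Hl2.
have Ha2 : agree U y2 c.
  apply: agree_trans (apply_out _ _ (all_sub SU Hw2)) _.
  apply: agree_trans topc_agree; exact: apply_out (all_sub SU Hw1).
have E12 : forall i, i \in S -> y2 i = y1 i by move=> i iS; apply: uniqC.
exists (w1 ++ w2), y1; split => //.
- by rewrite all_cat Hw1.
- rewrite size_cat -(card_split S (fun i => y1 i == sg i)).
  apply: leq_add.
    apply: leq_trans Hs1 _; apply: subset_leq_card; apply/subsetP => i.
    by rewrite !inE ffunE => /andP[iS]; rewrite iS /=; case: (y1 i); case: (sg i).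
  apply: leq_trans Hs2 _; apply: subset_leq_card; apply/subsetP => i.
  rewrite !inE => /andP[iS H]; rewrite iS /= -(E12 i iS).
  have := Hl2 i iS; move: H.
  by case: (t i); case: (y2 i); case: (sg i) => //= _; apply.
- move=> x Hx i iS.
  have Hb : leS S sg (apply_word f (w1 ++ w2) botc) (apply_word f (w1 ++ w2) x).
    apply: (word_mono SU mono); first by rewrite all_cat Hw1.
      exact: agree_trans botc_agree (agree_sym Hx).
    by move=> k kS; rewrite ffunE kS; case: (sg k).
  have Ht : leS S sg (apply_word f (w1 ++ w2) x) (apply_word f (w1 ++ w2) topc).
    apply: (word_mono SU mono); first by rewrite all_cat Hw1.
      exact: agree_trans Hx (agree_sym topc_agree).
    by move=> k kS; rewrite ffunE kS.
  move: Hb Ht; rewrite !apply_cat -/y1 -/t -/y2 (apply_fix (all_sub (subxx S) Hw2) Hf1).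
  move=> /(_ i iS) Hb /(_ i iS) Ht; move: Hb Ht; rewrite E12 //.
  move: (apply_word f w2 (apply_word f w1 x) i) => r.
  move=> /implyP H1 /implyP H2; move: H1 H2.
  by case: (y1 i); case: (sg i); case: r.
Qed.

End Sync.


Section Main.
Variable V : finType.
Variable f : config V -> config V.
Local Notation G := (interaction_digraph f).
Hypothesis noneg : ~ has_negative_cycle G.

Section SCC.
Variables (U : {set V}) (v : V).
Hypothesis vU : v \in U.
Hypothesis vmin : forall u, u \in U -> ureach f U u v -> ureach f U v u.

Definition Cset := [set u in U | ureach f U u v].
Definition sgC u := connect (R2 f U) (v, true) (u, true).

Lemma C_sub : Cset \subset U.
Proof. by apply/subsetP => u; rewrite inE => /andP[]. Qed.

Lemma arc_in (i j : V) b : i \in Cset -> j \in U -> ((j, i), b) \in G -> j \in Cset.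
Proof.
move=> iC jU Harc; move: iC; rewrite inE => /andP[iU Hi]; rewrite inE jU /=.
apply: ureach_trans Hi; apply: (@ureach_conn _ _ _ _ _ true b).
apply: connect1; rewrite /R2 /= jU iU /=.
have -> : (true == b) = b by case: b {Harc}.
exact: Harc.
Qed.

Lemma sg_conn u : u \in Cset -> connect (R2 f U) (v, true) (u, sgC u).
Proof.
rewrite inE => /andP[uU Hu]; have /existsP[b Hb] := vmin uU Hu.
rewrite /sgC; case E: (connect _ _ (u, true)) => //.
by case: b Hb; rewrite ?E.
Qed.

Lemma sg_unique u b : u \in Cset -> connect (R2 f U) (v, true) (u, b) -> b = sgC u.
Proof.
move=> uC Hb; apply/eqP/negP => Hne.
have Hs := sg_conn uC.
have /andP[_ Hu] : (u \in U) && ureach f U u v by move: uC; rewrite inE.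
have [d Hd] := ureachP (sgC u) Hu.
have Hd' := conn_flip Hd.
have E1 := conn_parity noneg (connect_trans Hs Hd).
have Hb' : b = ~~ sgC u by move: Hne; case: (b); case: (sgC u).
rewrite -Hb' in Hd'.
have E2 := conn_parity noneg (connect_trans Hb Hd').
by rewrite E1 in E2.
Qed.

Lemma cons_sg i j b : i \in Cset -> j \in Cset -> ((j, i), b) \in G -> b = (sgC j == sgC i).
Proof.
move=> iC jC Harc.
have Hc : connect (R2 f U) (v, true) (i, sgC j == b).
  apply: connect_trans (sg_conn jC) (connect1 _).
  rewrite /R2 /= (subsetP C_sub _ iC) (subsetP C_sub _ jC) /=.
  have -> : (sgC j == (sgC j == b)) = b by case: (sgC j); case: b {Harc}.
  exact: Harc.
have := sg_unique iC Hc.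
by move=> {Harc Hc}; case: (sgC j); case: (sgC i); case: b.
Qed.

Lemma monoC : forall x y, agree U x y -> leS Cset sgC x y -> leS Cset sgC (f x) (f y).
Proof.
move=> x y Ha Hl i iC; case Es: (sgC i).
  rewrite !eqb_id; apply: dep => j Hj; apply/negP => Harc.
  case jU: (j \in U); last by rewrite Ha ?jU ?eqxx in Hj.
  have jC := arc_in iC jU Harc.
  have Exj := cons_sg iC jC Harc; rewrite Es in Exj.
  have := Hl j jC; move: Hj; rewrite Exj.
  by move=> H1 /implyP H2; move: H1 H2; case: (sgC j); case: (y j).
move=> /eqP Hfx; apply/eqP; apply: negbTE; apply/negP => Hfy.
suff : f x i by rewrite Hfx.
move: Hfy; apply: dep => j Hj; apply/negP => Harc.
case jU: (j \in U); last by rewrite Ha ?jU ?eqxx in Hj.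
have jC := arc_in iC jU Harc.
have Eyj := cons_sg iC jC Harc; rewrite Es in Eyj.
have := Hl j jC; move: Hj; rewrite Eyj.
by move=> H1 /implyP H2; move: H1 H2; case: (sgC j); case: (x j).
Qed.

Lemma fC i (x y : config V) : i \in Cset ->
  (forall k, k \notin (U :\: Cset) -> x k = y k) -> f x i = f y i.
Proof.
move=> iC.
have H : forall x y : config V, (forall k, k \notin (U :\: Cset) -> x k = y k) ->
    f x i -> f y i.
  move=> x' y' Hxy; apply: dep => j Hj; apply/negP => Harc.
  case jU': (j \in U :\: Cset); last by rewrite Hxy ?jU' ?eqxx in Hj.
  move: jU'; rewrite inE => /andP[jnC jU].
  by rewrite (arc_in iC jU Harc) in jnC.
move=> Hxy; apply/idP/idP; apply: H => // k Hk; by rewrite Hxy.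
Qed.

End SCC.

Lemma claim n : forall U : {set V}, #|U| < n -> forall c : config V,
  (exists x, agree U x c /\ fixU f U x) /\
  ((forall x y, agree U x c -> fixU f U x -> agree U y c -> fixU f U y -> x = y) ->
   exists w, [/\ all (mem U) w, size w <= #|U| &
     exists z, forall x, agree U x c -> apply_word f w x = z]).
Proof.
elim: n => // n IH U HU c.
case: (set_0Vmem U) => [U0 | [u0 u0U]].
  subst U; split.
    by exists c; split => // i; rewrite inE.
  move=> _; exists [::]; split => //; exists c => x Hx.
  by apply/ffunP => k; apply: Hx; rewrite inE.
pose anc u := [set y | ureach f U y u].
case: (@arg_minnP _ u0 (fun u => u \in U) (fun u => #|anc u|) u0U) => v vU Hmin.
have vmin : forall u, u \in U -> ureach f U u v -> ureach f U v u.
  move=> u uU Hu.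
  have Hsub : anc u \subset anc v.
    by apply/subsetP => y; rewrite !inE => Hy; exact: ureach_trans Hy Hu.
  have Heq : #|anc u| = #|anc v|.
    by apply/eqP; rewrite eqn_leq subset_leq_card // Hmin.
  have Heqi := (subset_cardP Heq Hsub).
  by have := Heqi v; rewrite !inE ureach_refl.
pose C := Cset U v.
have CU : C \subset U by apply: C_sub.
have vC : v \in C by rewrite inE vU ureach_refl.
pose U' := U :\: C.
have HU' : #|U'| < n.
  rewrite /U'; have := cardsID C U.
  have : 0 < #|U :&: C| by apply/card_gt0P; exists v; rewrite inE vU vC.
  move: HU; lia.
have IH' := IH U' HU'.
have U'U : U' \subset U by apply: subsetDl.
have lift : forall c y, agree U y c -> fixU f C y ->
    forall x, agree U' x y -> fixU f U' x -> agree U x c /\ fixU f U x.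
  move=> c0 y Hy Hfy x Hx Hfx; split.
    move=> k kU; rewrite Hx ?Hy //; by rewrite inE (negbTE kU) andbF.
  move=> i iU; case iC: (i \in C).
    have iU' : i \notin U' by rewrite inE iC.
    rewrite (fC iC Hx) Hfy // Hx //.
  by apply: Hfx; rewrite inE iC iU.
have monoC' := monoC vmin.
split.
  have [y [Hy Hfy]] := exist_C CU monoC' c.
  have [[x [Hx Hfx]] _] := IH' y.
  by exists x; exact: lift Hy Hfy x Hx Hfx.
move=> Huniq.
have uniqC : forall y y', agree U y c -> fixU f C y -> agree U y' c -> fixU f C y' ->
    forall i, i \in C -> y i = y' i.
  move=> y y' Hy Hfy Hy' Hfy' i iC.
  have [[x [Hx Hfx]] _] := IH' y.
  have [[x' [Hx' Hfx']] _] := IH' y'.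
  have [Ha Hf] := lift c y Hy Hfy x Hx Hfx.
  have [Ha' Hf'] := lift c y' Hy' Hfy' x' Hx' Hfx'.
  have Exx := Huniq x x' Ha Hf Ha' Hf'.
  have iU' : i \notin U' by rewrite inE iC.
  by rewrite -(Hx i iU') -(Hx' i iU') Exx.
have [w1 [y1 [Hw1 Hs1 Ha1 Hf1 Hsync]]] := sync_C CU monoC' uniqC.
have [_ Hb] := IH' y1.
have [|w' [Hw' Hs' [z Hz]]] := Hb.
  move=> x x' Hx Hfx Hx' Hfx'.
  have [Ha Hf] := lift c y1 Ha1 Hf1 x Hx Hfx.
  have [Ha' Hf'] := lift c y1 Ha1 Hf1 x' Hx' Hfx'.
  exact: Huniq.
exists (w1 ++ w'); split.
- by rewrite all_cat (all_sub CU Hw1) (all_sub U'U Hw').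
- rewrite size_cat -(cardsID C U) (setIidPr CU); exact: leq_add.
- exists z => x Hx; rewrite apply_cat; apply: Hz => k kU'.
  case kC: (k \in C); first exact: Hsync.
  have kU : k \notin U by move: kU'; rewrite inE kC.
  by rewrite (apply_out _ _ (all_sub CU Hw1)) // Hx // Ha1.
Qed.

End Main.

Theorem proposition8 (V : finType) (G : signed_digraph V)
    (f : config V -> config V) :
  ~ has_negative_cycle G -> BN_on G f ->
  (unique_fixed_point f <->
     exists w : seq V, size w = #|V| /\ synchronizing_word f w) /\
  ((exists w : seq V, size w = #|V| /\ synchronizing_word f w) <->
     synchronizing f).
Proof.
move=> Hneg HG; rewrite /BN_on in HG; subst G.
pose c0 : config V := [ffun => false].
have [[x0 [_ Hx0]] Hb] := claim Hneg (ltnSn #|[set: V]|) c0.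
have agT : forall x, agree [set: V] x c0 by move=> x k; rewrite in_setT.
have allT : forall w : seq V, all (mem [set: V]) w by move=> w; apply/allP => k _; rewrite inE.
have fixT : forall x, fixU f [set: V] x <-> f x = x.
  move=> x; split; last by move=> E i _; rewrite E.
  by move=> H; apply/ffunP => i; apply: H; rewrite in_setT.
have H12 : unique_fixed_point f ->
    exists w : seq V, size w = #|V| /\ synchronizing_word f w.
  case=> z [Hz Huq].
  have [|w [_ Hs [z' Hz']]] := Hb.
    move=> x y _ /fixT Hx _ /fixT Hy.
    by rewrite -(Huq x Hx) -(Huq y Hy).
  have Hzz : z' = z.
    by rewrite -(Hz' z (agT z)) (apply_fix (allT w)) //; apply/fixT.
  rewrite cardsT in Hs.
  case E: (#|V| - size w) => [|k].
    exists w; split; first by lia.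
    by exists z' => x; apply: Hz'.
  have : 0 < #|V| by lia.
  case/card_gt0P => v0 _.
  exists (w ++ nseq k.+1 v0); split.
    by rewrite size_cat size_nseq; lia.
  exists z => x; rewrite apply_cat Hz' // Hzz.
  by apply: (apply_fix (allT _)); apply/fixT.
have H31 : synchronizing f -> unique_fixed_point f.
  case=> w [c Hc]; exists x0; split; first by apply/fixT.
  move=> y /fixT Hy.
  by rewrite -(apply_fix (allT w) Hx0) Hc -(Hc y) (apply_fix (allT w) Hy).
split; split => //.
- by case=> w [_ Hw]; apply: H31; exists w.
- by case=> w [_ Hw]; exists w.
- by move=> /H31; exact: H12.
Qed.
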